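(* Let $e$ be a $\mathtt{test}$-free expression (no subexpression of the form $\mathtt{test}\ p\ \mathtt{then}\ e'\ \mathtt{else}\ e''$) such that $\varnothing;\,n\vdash e:\mathtt{bool},\ \Pi$ is derivable in the static analysis. Then for all $P\subseteq\mathsf{Privileges}$ with $\Pi\subseteq P$, $[\![\varnothing\vdash e:\mathtt{bool}]\!]\,n\,P\,\{\}=[\![\varnothing\vdash e^-:\mathtt{bool}]\!]\,n\,P\,\{\}$, where $e^-$ is the erasure of $e$.
   Context: Fix sets $\mathsf{Principals}$ and $\mathsf{Privileges}$ and an access control list $\mathcal{A}:\mathsf{Principals}\to\mathcal{P}(\mathsf{Privileges})$. Language. Types: $t::=\mathtt{bool}\mid t_1\to t_2$. Expressions: $e::=\mathtt{true}\mid x\mid \mathtt{if}\ e\ \mathtt{then}\ e_1\ \mathtt{else}\ e_2\mid \lambda x.e\mid e_1\,e_2\mid \mathtt{letrec}\ f(x)=e_1\ \mathtt{in}\ e_2\mid \mathtt{signs}\ n\ e\mid \mathtt{dopriv}\ p\ \mathtt{in}\ e\mid \mathtt{check}\ p\ \mathtt{for}\ e\mid \mathtt{test}\ p\ \mathtt{then}\ e_1\ \mathtt{else}\ e_2$ ($n$ a principal, $p$ a privilege). Typing $D\vdash e:t$ is simply typed: $\mathtt{letrec}$ typed by $D,f:t_1\to t_2,x:t_1\vdash e_1:t_2$ and $D,f:t_1\to t_2\vdash e_2:t$; $\mathtt{signs},\mathtt{dopriv},\mathtt{check}$ preserve the body type; $\mathtt{test}$, $\mathtt{if}$ need branches of a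 common type ($\mathtt{if}$ a $\mathtt{bool}$ guard). Erasure $(\cdot)^-$ (defined on $\mathtt{test}$-free expressions): $\mathtt{true}^-=\mathtt{true}$, $x^-=x$, $(\mathtt{if}\ e_1\ \mathtt{then}\ e_2\ \mathtt{else}\ e_3)^-=\mathtt{if}\ e_1^-\ \mathtt{then}\ e_2^-\ \mathtt{else}\ e_3^-$, $(\lambda x.e)^-=\lambda x.e^-$, $(e_1e_2)^-=e_1^-e_2^-$, $(\mathtt{letrec}\ f(x)=e_1\ \mathtt{in}\ e_2)^-=\mathtt{letrec}\ f(x)=e_1^-\ \mathtt{in}\ e_2^-$, $(\mathtt{signs}\ n\ e)^-=\mathtt{signs}\ n\ e^-$, $(\mathtt{dopriv}\ p\ \mathtt{in}\ e)^-=e^-$, $(\mathtt{check}\ p\ \mathtt{for}\ e)^-=e^-$. Eager semantics. $\bot,\star$ are two distinct values, neither booleans nor functions. For a cpo $C$, $C_{\bot\star}=C\cup\{\bot,\star\}$ with $u\le v$ iff $u=\bot$ or $u=v$ or $u,v\in C$, $u\le v$. $[\![\mathtt{bool}]\!]=\{\mathsf{true},\mathsf{false}\}$ and $\mathcal{P}(\mathsf{Privileges})$ ordered by equality; $[\![t_1\to t_2]\!]=\mathcal{P}(\mathsf{Privileges})\to[\![t_1]\!]\to[\![t_2]\!]_{\bot\star}$ (continuous, pointwise order). $[\![D]\!]$: records $h$ with $h.x\in[\![D(x)]\!]$; $\{\}$ is the empty record. $[\![D\vdash e:t]\!]\in\mathsf{Principals}\to\mathcal{P}(\mathsf{Privileges})\to[\![D]\!]\to[\![t]\!]_{\bot\star}$,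 written $[\![e]\!]nPh$. ''let $d=E_1$ in $E_2$'' yields $E_1$ if $E_1\in\{\bot,\star\}$, else $E_2$ with $d:=E_1$. $P\sqcup_n\{p\}$ is $P\cup\{p\}$ if $p\in\mathcal{A}(n)$, else $P$. Equations: $[\![\mathtt{true}]\!]nPh=\mathsf{true}$; $[\![x]\!]nPh=h.x$; $[\![\mathtt{if}\ e\ \mathtt{then}\ e_1\ \mathtt{else}\ e_2]\!]nPh=$ let $b=[\![e]\!]nPh$ in (if $b$ then $[\![e_1]\!]nPh$ else $[\![e_2]\!]nPh$); $[\![\lambda x.e]\!]nPh=\lambda P'.\lambda d.[\![e]\!]nP'(h[x\mapsto d])$; $[\![e_1e_2]\!]nPh=$ let $f=[\![e_1]\!]nPh$ in let $d=[\![e_2]\!]nPh$ in $fPd$; $[\![\mathtt{letrec}\ f(x)=e_1\ \mathtt{in}\ e_2]\!]nPh=[\![e_2]\!]nP(h[f\mapsto\mathit{fix}\,G])$ with $G(g)=\lambda P'.\lambda d.[\![e_1]\!]nP'(h[f\mapsto g,x\mapsto d])$ (least fixed point); $[\![\mathtt{signs}\ n'\ e]\!]nPh=[\![e]\!]n'(P\cap\mathcal{A}(n'))h$; $[\![\mathtt{dopriv}\ p\ \mathtt{in}\ e]\!]nPh=[\![e]\!]n(P\sqcup_n\{p\})h$; $[\![\mathtt{check}\ p\ \mathtt{for}\ e]\!]nPh=$ if $p\in P$ then $[\![e]\!]nPh$ else $\star$; $[\![\mathtt{test}\ p\ \mathtt{then}\ e_1\ \mathtt{else}\ e_2]\!]nPh=$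 if $p\in P$ then $[\![e_1]\!]nPh$ else $[\![e_2]\!]nPh$. Static analysis. Annotated types $\theta::=\mathtt{bool}\mid\theta_1\xrightarrow{\Pi}\theta_2$ ($\Pi\subseteq\mathsf{Privileges}$); erasure $\mathtt{bool}^*=\mathtt{bool}$, $(\theta_1\xrightarrow{\Pi}\theta_2)^*=\theta_1^*\to\theta_2^*$. Subtyping: least relation with $\mathtt{bool}\le\mathtt{bool}$ and $\theta_1\xrightarrow{\Pi_1}\theta_1'\le\theta_2\xrightarrow{\Pi_2}\theta_2'$ if $\theta_2\le\theta_1$, $\theta_1'\le\theta_2'$, $\Pi_1\subseteq\Pi_2$. Rules for $\Delta;n\vdash e:\theta,\Pi$ ($\Delta$ maps variables to annotated types): $\mathtt{true}:\mathtt{bool},\varnothing$; $x:\Delta(x),\varnothing$; $\lambda x.e:\theta_1\xrightarrow{\Pi}\theta_2,\varnothing$ if $\Delta,x:\theta_1;n\vdash e:\theta_2,\Pi$; $e_1e_2:\theta_2,\Pi\cup\Pi_1\cup\Pi_2$ if $e_1:\theta_1\xrightarrow{\Pi}\theta_2,\Pi_1$, $e_2:\theta_1',\Pi_2$, $\theta_1'\le\theta_1$; $\mathtt{if}\ e\ \mathtt{then}\ e_1\ \mathtt{else}\ e_2:\theta,\Pi_1\cup\Pi_2\cup\Pi_3$ if $e:\mathtt{bool},\Pi_1$, $e_1:\theta,\Pi_2$, $e_2:\theta,\Pi_3$; $\mathtt{letrec}\ f(x)=e_1\ \mathtt{in}\ e_2:\theta,\Pi\cup\Pi_1$ if $\Delta,f:\theta_1\xrightarrow{\Pi}\theta_2,x:\theta_1;n\vdash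 e_1:\theta_2,\Pi$ and $\Delta,f:\theta_1\xrightarrow{\Pi}\theta_2;n\vdash e_2:\theta,\Pi_1$; $\mathtt{check}\ p\ \mathtt{for}\ e:\theta,\Pi\cup\{p\}$ if $e:\theta,\Pi$; $\mathtt{dopriv}\ p\ \mathtt{in}\ e:\theta,\Pi$ if $e:\theta,\Pi\sqcup_n\{p\}$; $\Delta;n\vdash\mathtt{signs}\ n'\ e:\theta,\Pi$ if $\Delta;n'\vdash e:\theta,\Pi$ and $\Pi\subseteq\mathcal{A}(n')$; $\mathtt{test}\ p\ \mathtt{then}\ e_1\ \mathtt{else}\ e_2:\theta,\Pi_1\cup\Pi_2$ if $e_1:\theta,\Pi_1$, $e_2:\theta,\Pi_2$ (premises under $\Delta;n$ unless stated). *)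

(* Defs.v *)
From Stdlib Require Import Arith ClassicalDescription ClassicalEpsilon.

Set Implicit Arguments.

Definition PrivSet (Privilege : Type) := Privilege -> Prop.
Definition subset {X} (A B : PrivSet X) : Prop := forall p, A p -> B p.
Definition union {X} (A B : PrivSet X) : PrivSet X := fun p => A p \/ B p.
Definition inter {X} (A B : PrivSet X) : PrivSet X := fun p => A p /\ B p.
Definition single {X} (p : X) : PrivSet X := fun q => q = p.
Definition empty {X} : PrivSet X := fun _ => False.

Definition var := nat.

Inductive ty : Type :=
| Bool : ty
| Arr : ty -> ty -> ty.

Section Lang.
Variables (Principal Privilege : Type).

Inductive expr : Type :=
| ETrue : expr
| EVar : var -> expr
| EIf : expr -> expr -> expr -> expr
| ELam : var -> expr -> expr
| EApp : expr -> expr -> expr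
| ELetrec : var -> var -> expr -> expr -> expr      (* letrec f(x) = e1 in e2 *)
| ESigns : Principal -> expr -> expr
| EDopriv : Privilege -> expr -> expr
| ECheck : Privilege -> expr -> expr
| ETest : Privilege -> expr -> expr -> expr.

Fixpoint test_free (e : expr) : Prop :=
  match e with
  | ETrue | EVar _ => True
  | EIf e e1 e2 => test_free e /\ test_free e1 /\ test_free e2
  | ELam _ e => test_free e
  | EApp e1 e2 => test_free e1 /\ test_free e2
  | ELetrec _ _ e1 e2 => test_free e1 /\ test_free e2
  | ESigns _ e | EDopriv _ e | ECheck _ e => test_free e
  | ETest _ _ _ => False
  end.

(* Erasure (only meaningful on test-free expressions; the test case is an
   arbitrary choice and is never used under the hypothesis test_free). *)
Fixpoint erase (e : expr) : expr :=
  match e with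
  | ETrue => ETrue
  | EVar x => EVar x
  | EIf e1 e2 e3 => EIf (erase e1) (erase e2) (erase e3)
  | ELam x e => ELam x (erase e)
  | EApp e1 e2 => EApp (erase e1) (erase e2)
  | ELetrec f x e1 e2 => ELetrec f x (erase e1) (erase e2)
  | ESigns n e => ESigns n (erase e)
  | EDopriv _ e => erase e
  | ECheck _ e => erase e
  | ETest p e1 e2 => ETest p (erase e1) (erase e2)
  end.

(* Simple typing D |- e : t  (in Type, so the semantics can recurse on it) *)
Definition ctx := var -> option ty.
Definition ctx0 : ctx := fun _ => None.
Definition ext (D : ctx) (x : var) (t : ty) : ctx :=
  fun y => if Nat.eqb y x then Some t else D y.

Unset Implicit Arguments.
Inductive typing : ctx -> expr -> ty -> Type :=
| T_true D : typing D ETrue Bool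
| T_var D x t : D x = Some t -> typing D (EVar x) t
| T_if D e e1 e2 t :
    typing D e Bool -> typing D e1 t -> typing D e2 t -> typing D (EIf e e1 e2) t
| T_lam D x e t1 t2 : typing (ext D x t1) e t2 -> typing D (ELam x e) (Arr t1 t2)
| T_app D e1 e2 t1 t2 :
    typing D e1 (Arr t1 t2) -> typing D e2 t1 -> typing D (EApp e1 e2) t2
| T_letrec D f x e1 e2 t1 t2 t :
    typing (ext (ext D f (Arr t1 t2)) x t1) e1 t2 ->
    typing (ext D f (Arr t1 t2)) e2 t ->
    typing D (ELetrec f x e1 e2) t
| T_signs D n e t : typing D e t -> typing D (ESigns n e) t
| T_dopriv D p e t : typing D e t -> typing D (EDopriv p e) t
| T_check D p e t : typing D e t -> typing D (ECheck p e) t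
| T_test D p e1 e2 t : typing D e1 t -> typing D e2 t -> typing D (ETest p e1 e2) t.
Set Implicit Arguments.

(* Semantic domains.  A poset is a carrier with an order; cpo-ness       *)
(* (existence of lubs of chains) is a property, not needed to define     *)
(* the semantics.                                                        *)
Record poset := Poset { car :> Type; ord : car -> car -> Prop }.
Arguments Poset : clear implicits.

Inductive lift (A : Type) : Type :=
| Bot : lift A
| Star : lift A
| Val : A -> lift A.
Arguments Bot {A}. Arguments Star {A}.

Definition le_lift (A : Type) (le : A -> A -> Prop) (u v : lift A) : Prop :=
  u = Bot \/ u = v \/ exists a b, u = Val a /\ v = Val b /\ le a b.

Definition lift_poset (C : poset) : poset := Poset (lift C) (le_lift (@ord C)).

Definition is_chain (C : poset) (c : nat -> C) : Prop :=
  forall k, ord C (c k) (c (S k)).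
Definition is_lub (C : poset) (c : nat -> C) (l : C) : Prop :=
  (forall k, ord C (c k) l) /\ (forall u, (forall k, ord C (c k) u) -> ord C l u).

Definition continuous (C1 C2 : poset) (f : C1 -> C2) : Prop :=
  (forall a b, ord C1 a b -> ord C2 (f a) (f b)) /\
  (forall c l, is_chain C1 c -> is_lub C1 c l -> is_lub C2 (fun k => f (c k)) (f l)).

Definition fun_poset (C1 C2 : poset) : poset :=
  Poset { f : PrivSet Privilege -> C1 -> lift C2
        | forall P, continuous C1 (lift_poset C2) (f P) }
        (fun f g => forall P d, le_lift (@ord C2) (proj1_sig f P d) (proj1_sig g P d)).

Definition bool_poset : poset := Poset bool (fun a b => a = b).

Fixpoint dom (t : ty) : poset :=
  match t with
  | Bool => bool_poset
  | Arr t1 t2 => fun_poset (dom t1) (dom t2)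
  end.

Definition sem (t : ty) : Type := car (dom t).

Lemma bot_continuous (C1 C2 : poset) :
  continuous C1 (lift_poset C2) (fun _ => Bot).
Proof.
  split.
  - intros; left; reflexivity.
  - intros c l _ _; split.
    + intros; left; reflexivity.
    + intros; left; reflexivity.
Qed.

Definition bot_fun (t1 t2 : ty) : sem (Arr t1 t2) :=
  exist (fun f : PrivSet Privilege -> dom t1 -> lift (dom t2) =>
           forall P, continuous (dom t1) (lift_poset (dom t2)) (f P))
        (fun _ _ => Bot) (fun _ => bot_continuous (dom t1) (dom t2)).

(* lambda P'. lambda d. F P' d as an element of [[t1 -> t2]]: the
   construction is continuous in all uses (a lemma of the paper); the
   (classical) guard only makes the definition total. *)
Definition mk_fun (t1 t2 : ty) (F : PrivSet Privilege -> sem t1 -> lift (sem t2))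
  : sem (Arr t1 t2) :=
  match excluded_middle_informative
          (forall P, continuous (dom t1) (lift_poset (dom t2)) (F P)) with
  | left H => exist (fun f : PrivSet Privilege -> dom t1 -> lift (dom t2) =>
           forall P, continuous (dom t1) (lift_poset (dom t2)) (f P)) F H
  | right _ => bot_fun t1 t2
  end.

Definition is_least_fp (C : poset) (G : C -> C) (g : C) : Prop :=
  G g = g /\ forall g', G g' = g' -> ord C g g'.

Definition lfp (t1 t2 : ty) (G : sem (Arr t1 t2) -> sem (Arr t1 t2)) : sem (Arr t1 t2) :=
  match excluded_middle_informative (exists g, is_least_fp (dom (Arr t1 t2)) G g) with
  | left H => proj1_sig (constructive_indefinite_description _ H)
  | right _ => bot_fun t1 t2
  end.

Definition sem_opt (o : option ty) : Type :=
  match o with Some t => sem t | None => unit end.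
Definition env (D : ctx) : Type := forall y, sem_opt (D y).
Definition env0 : env ctx0 := fun _ => tt.

Definition upd (D : ctx) (h : env D) (x : var) (t : ty) (v : sem t) : env (ext D x t) :=
  fun y => if Nat.eqb y x as b return sem_opt (if b then Some t else D y)
           then v else h y.

Definition lookup (D : ctx) (h : env D) (x : var) (t : ty) (H : D x = Some t) : sem t :=
  eq_rect (D x) sem_opt (h x) (Some t) H.

Variable A : Principal -> PrivSet Privilege.   (* the access control list *)

Definition mem (P : PrivSet Privilege) (p : Privilege) : bool :=
  if excluded_middle_informative (P p) then true else false.

Definition join (n : Principal) (P : PrivSet Privilege) (p : Privilege) : PrivSet Privilege :=
  if mem (A n) p then union P (single p) else P.

Definition bind (X Y : Type) (u : lift X) (k : X -> lift Y) : lift Y :=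
  match u with Bot => Bot | Star => Star | Val x => k x end.

Fixpoint den (D : ctx) (e : expr) (t : ty) (d : typing D e t) {struct d}
  : Principal -> PrivSet Privilege -> env D -> lift (sem t) :=
  match d in typing D e t return Principal -> PrivSet Privilege -> env D -> lift (sem t) with
  | T_true _ => fun n P h => Val (true : sem Bool)
  | T_var _ x t Hx => fun n P h => Val (@lookup _ h x t Hx)
  | T_if _ _ _ _ _ d0 d1 d2 => fun n P h =>
      bind (den d0 n P h) (fun b : sem Bool => if b then den d1 n P h else den d2 n P h)
  | T_lam _ x _ t1 t2 d0 => fun n P h =>
      Val (@mk_fun t1 t2 (fun P' v => den d0 n P' (@upd _ h x t1 v)))
  | T_app _ _ _ t1 t2 d1 d2 => fun n P h =>
      bind (den d1 n P h) (fun f : sem (Arr t1 t2) =>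
        bind (den d2 n P h) (fun v => proj1_sig f P v))
  | T_letrec _ f x _ _ t1 t2 _ d1 d2 => fun n P h =>
      den d2 n P (@upd _ h f (Arr t1 t2)
        (@lfp t1 t2 (fun g => @mk_fun t1 t2 (fun P' v =>
           den d1 n P' (@upd _ (@upd _ h f (Arr t1 t2) g) x t1 v)))))
  | T_signs _ n' _ _ d0 => fun n P h => den d0 n' (inter P (A n')) h
  | T_dopriv _ p _ _ d0 => fun n P h => den d0 n (join n P p) h
  | T_check _ p _ _ d0 => fun n P h => if mem P p then den d0 n P h else Star
  | T_test _ p _ _ _ d1 d2 => fun n P h => if mem P p then den d1 n P h else den d2 n P h
  end.

Inductive aty : Type :=
| ABool : aty
| AArr : aty -> PrivSet Privilege -> aty -> aty.

Inductive subty : aty -> aty -> Prop :=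
| S_bool : subty ABool ABool
| S_arr th1 th1' th2 th2' Pi1 Pi2 :
    subty th2 th1 -> subty th1' th2' -> subset Pi1 Pi2 ->
    subty (AArr th1 Pi1 th1') (AArr th2 Pi2 th2').

Definition actx := var -> option aty.
Definition actx0 : actx := fun _ => None.
Definition aext (G : actx) (x : var) (th : aty) : actx :=
  fun y => if Nat.eqb y x then Some th else G y.

Inductive sa : actx -> Principal -> expr -> aty -> PrivSet Privilege -> Prop :=
| SA_true G n : sa G n ETrue ABool empty
| SA_var G n x th : G x = Some th -> sa G n (EVar x) th empty
| SA_lam G n x e th1 th2 Pi :
    sa (aext G x th1) n e th2 Pi -> sa G n (ELam x e) (AArr th1 Pi th2) empty
| SA_app G n e1 e2 th1 th1' th2 Pi Pi1 Pi2 :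
    sa G n e1 (AArr th1 Pi th2) Pi1 -> sa G n e2 th1' Pi2 -> subty th1' th1 ->
    sa G n (EApp e1 e2) th2 (union Pi (union Pi1 Pi2))
| SA_if G n e e1 e2 th Pi1 Pi2 Pi3 :
    sa G n e ABool Pi1 -> sa G n e1 th Pi2 -> sa G n e2 th Pi3 ->
    sa G n (EIf e e1 e2) th (union Pi1 (union Pi2 Pi3))
| SA_letrec G n f x e1 e2 th1 th2 th Pi Pi1 :
    sa (aext (aext G f (AArr th1 Pi th2)) x th1) n e1 th2 Pi ->
    sa (aext G f (AArr th1 Pi th2)) n e2 th Pi1 ->
    sa G n (ELetrec f x e1 e2) th (union Pi Pi1)
| SA_check G n p e th Pi :
    sa G n e th Pi -> sa G n (ECheck p e) th (union Pi (single p))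
| SA_dopriv G n p e th Pi :
    sa G n e th (join n Pi p) -> sa G n (EDopriv p e) th Pi
| SA_signs G n n' e th Pi :
    sa G n' e th Pi -> subset Pi (A n') -> sa G n (ESigns n' e) th Pi
| SA_test G n p e1 e2 th Pi1 Pi2 :
    sa G n e1 th Pi1 -> sa G n e2 th Pi2 -> sa G n (ETest p e1 e2) th (union Pi1 Pi2).

End Lang.

(* Main.v *)
Require Import Defs.
From Stdlib Require Import Arith Lia ClassicalDescription ClassicalEpsilon FunctionalExtensionality ProofIrrelevance.

Arguments Bot {A}. Arguments Star {A}. Arguments Val {A} _.
Definition PO (C : poset) := (forall a, ord C a a) /\
  (forall a b c, ord C a b -> ord C b c -> ord C a c) /\
  (forall a b, ord C a b -> ord C b a -> a = b).
Definition CPO (C : poset) := PO C /\ forall c, is_chain C c -> exists l, is_lub C c l.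

Section G.
Variable C : poset.
Hypothesis po : PO C.

Lemma po_refl a : ord C a a. Proof. apply po. Qed.
Lemma po_trans a b c : ord C a b -> ord C b c -> ord C a c. Proof. apply po. Qed.
Lemma po_anti a b : ord C a b -> ord C b a -> a = b. Proof. apply po. Qed.

Lemma chain_le c : is_chain C c -> forall i j, i <= j -> ord C (c i) (c j).
Proof.
  intros Hc i j Hij. induction Hij. apply po_refl. eapply po_trans; eauto.
Qed.

Lemma lub_unique c l l' : is_lub C c l -> is_lub C c l' -> l = l'.
Proof.
  intros [H1 H2] [H3 H4]. apply po_anti; [apply H2|apply H4]; auto.
Qed.

Lemma lub_tail c m l : is_chain C c -> is_lub C (fun j => c (j + m)) l -> is_lub C c l.
Proof.
  intros Hc [H1 H2]. split.
  - intros k. eapply po_trans; [apply (chain_le c Hc k (k+m)); lia|apply H1].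
  - intros u Hu. apply H2. intros; apply Hu.
Qed.

Lemma lub_tail' c m l : is_chain C c -> is_lub C c l -> is_lub C (fun j => c (j + m)) l.
Proof.
  intros Hc [H1 H2]. split.
  - intros k. apply H1.
  - intros u Hu. apply H2. intros k. eapply po_trans; [apply (chain_le c Hc k (k+m)); lia|apply Hu].
Qed.

Lemma lub_const a : is_lub C (fun _ => a) a.
Proof. split; [intros; apply po_refl|intros u H; apply (H 0)]. Qed.

Lemma lub_const_eq c a : (forall k, c k = a) -> is_lub C c a.
Proof. intros H; split; [intros; rewrite H; apply po_refl|intros u Hu; rewrite <- (H 0); apply Hu]. Qed.

Variable a : nat -> nat -> C.
Hypothesis amono : forall k k' j j', k <= k' -> j <= j' -> ord C (a k j) (a k' j').

Lemma diag_of_rows r L : (forall k, is_lub C (fun j => a k j) (r k)) -> is_lub C r L ->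
  is_lub C (fun k => a k k) L.
Proof.
  intros Hr [H1 H2]. split.
  - intros k. eapply po_trans; [apply (proj1 (Hr k))|apply H1].
  - intros u Hu. apply H2. intros k. apply (proj2 (Hr k)). intros j.
    eapply po_trans; [|apply (Hu (max k j))]. apply amono; lia.
Qed.

Lemma cols_of_diag s L : (forall j, is_lub C (fun k => a k j) (s j)) -> is_lub C (fun k => a k k) L ->
  is_lub C s L.
Proof.
  intros Hs [H1 H2]. split.
  - intros j. apply (proj2 (Hs j)). intros k.
    eapply po_trans; [|apply (H1 (max k j))]. apply amono; lia.
  - intros u Hu. apply H2. intros k. eapply po_trans; [apply (proj1 (Hs k))|apply Hu].
Qed.
End G.
Section L.
Variable C : poset.
Hypothesis po : PO C.
Notation LC := (lift_poset C).

Lemma lift_po : PO LC.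
Proof.
  split; [|split].
  - intros a. right; left; reflexivity.
  - intros a b c [H|[H|(x&y&->&->&H)]] [H'|[H'|(x'&y'&H1&->&H')]]; subst;
      try (left; reflexivity); try (right; left; reflexivity); try discriminate.
    + right; right; eauto.
    + right; right; eauto.
    + injection H1 as ->. right; right. exists x, y'. split; auto. split; auto. eapply po_trans; eauto.
  - intros a b [H|[H|(x&y&->&->&H)]] [H'|[H'|(x'&y'&H1&H2&H')]]; subst; auto; try discriminate.
    injection H1 as ->; injection H2 as ->. f_equal. apply (po_anti C po); auto.
Qed.

Lemma le_val_l a v : le_lift (ord C) (Val a) v -> exists b, v = Val b /\ ord C a b.
Proof. intros [H|[H|(x&y&H1&->&H)]]; try discriminate. subst; exists a; split; auto; apply po_refl; auto.
  injection H1 as ->; eauto. Qed.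
Lemma le_star_l v : le_lift (ord C) Star v -> v = Star.
Proof. intros [H|[H|(x&y&H1&->&H)]]; try discriminate; auto. Qed.
Lemma le_bot_r u : le_lift (ord C) u Bot -> u = Bot.
Proof. intros [H|[H|(x&y&H1&H2&H)]]; try discriminate; auto. Qed.
Lemma le_bot u : le_lift (ord C) Bot u.
Proof. left; reflexivity. Qed.
Lemma le_vals a b : ord C a b -> le_lift (ord C) (Val a) (Val b).
Proof. intros; right; right; eauto. Qed.

Lemma val_tail u k0 a0 : is_chain LC u -> u k0 = Val a0 ->
  exists a, is_chain C a /\ forall j, u (j + k0) = Val (a j).
Proof.
  intros Hu H0.
  assert (Hv : forall j, exists b, u (j + k0) = Val b).
  { induction j. exists a0; auto. destruct IHj as [b Hb].
    destruct (le_val_l b (u (S j + k0))) as [b' [Hb' _]]. rewrite <- Hb. apply (Hu (j+k0)). eauto. }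
  destruct (choice _ Hv) as [a Ha]. exists a; split; auto.
  intros j. specialize (Hu (j + k0)). rewrite Ha in Hu. change (S (j+k0)) with (S j + k0) in Hu.
  rewrite Ha in Hu. destruct (le_val_l _ _ Hu) as [b [Hb Hab]]. injection Hb as <-. auto.
Qed.

Lemma lub_vals a al : is_lub C a al -> is_lub LC (fun k => Val (a k)) (Val al).
Proof.
  intros [H1 H2]. split.
  - intros; apply le_vals; auto.
  - intros v Hv. destruct (le_val_l _ _ (Hv 0)) as [b [-> _]]. apply le_vals. apply H2.
    intros k. destruct (le_val_l _ _ (Hv k)) as [b' [Hb' H']]. injection Hb' as ->. auto.
Qed.

Lemma lift_lub_cases (cpo : CPO C) u ul : is_chain LC u -> is_lub LC u ul ->
  ((forall k, u k = Bot) /\ ul = Bot) \/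
  ((exists k, u k = Star) /\ ul = Star) \/
  (exists k0 a al, is_chain C a /\ (forall j, u (j + k0) = Val (a j)) /\ is_lub C a al /\ ul = Val al).
Proof.
  intros Hu Hl.
  destruct (classic (exists k, u k = Star)) as [[k Hk]|Hns].
  { right; left. split; eauto. apply le_star_l. rewrite <- Hk. apply Hl. }
  destruct (classic (exists k a, u k = Val a)) as [(k&a0&Hk)|Hnv].
  { right; right. destruct (val_tail u k a0 Hu Hk) as [a [Ha Hua]].
    destruct (proj2 cpo a Ha) as [al Hal]. exists k, a, al. split; [auto|split; [auto|split; [auto|]]].
    apply (lub_unique LC lift_po u); auto. apply (lub_tail LC lift_po u k); auto.
    replace (fun j => u (j + k)) with (fun j => Val (a j)) by (apply functional_extensionality; intros; rewrite Hua; auto). apply lub_vals; auto. }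
  left. assert (HB : forall k, u k = Bot).
  { intros k. destruct (u k) eqn:E; auto. exfalso; eauto. exfalso; eauto. }
  split; auto. apply le_bot_r. apply Hl. intros k; rewrite HB; apply le_bot.
Qed.
End L.
Lemma le_to_star C (po : PO C) u : le_lift (ord C) u Star -> u = Bot \/ u = Star.
Proof. intros [H|[H|(x&y&H1&H2&H)]]; auto; discriminate. Qed.

Lemma lift_cpo C : CPO C -> CPO (lift_poset C).
Proof.
  intros cpo. pose proof (proj1 cpo) as po. split. apply lift_po; auto.
  intros u Hu.
  destruct (classic (exists k, u k = Star)) as [[k Hk]|Hns].
  { exists Star. split.
    - intros j. destruct (le_lt_dec k j).
      + rewrite (le_star_l C (u j)). apply (po_refl _ (lift_po C po)). rewrite <- Hk. apply (chain_le _ (lift_po C po)); auto.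
      + assert (H : le_lift (ord C) (u j) Star) by (rewrite <- Hk; apply (chain_le _ (lift_po C po)); auto; lia).
        destruct (le_to_star C po _ H) as [->| ->]. left; auto. right; left; auto.
    - intros v Hv. specialize (Hv k). rewrite Hk in Hv. rewrite (le_star_l C v Hv). right; left; auto. }
  destruct (classic (exists k a, u k = Val a)) as [(k&a0&Hk)|Hnv].
  { destruct (val_tail C po u k a0 Hu Hk) as [a [Ha Hua]].
    destruct (proj2 cpo a Ha) as [al Hal]. exists (Val al).
    apply (lub_tail _ (lift_po C po) u k); auto.
    replace (fun j => u (j + k)) with (fun j => Val (a j)) by (apply functional_extensionality; intros; rewrite Hua; auto). apply lub_vals; auto. }
  exists Bot. apply lub_const_eq. apply lift_po; auto.
  intros k. destruct (u k) eqn:E; auto. exfalso; eauto. exfalso; eauto.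
Qed.

Section B.
Variables X Y : poset.
Hypothesis cX : CPO X.
Hypothesis pY : PO Y.

Lemma bind_mono (u u' : lift X) (K K' : X -> lift Y) :
  le_lift (ord X) u u' -> (forall x x', ord X x x' -> le_lift (ord Y) (K x) (K' x')) ->
  le_lift (ord Y) (bind u K) (bind u' K').
Proof.
  intros [H|[H|(x&y&->&->&H)]] HK; subst; simpl.
  - left; auto.
  - destruct u'; simpl. left; auto. right; left; auto. apply HK. apply (po_refl _ (proj1 cX)).
  - apply HK; auto.
Qed.

Lemma bind_cont (u : nat -> lift X) ul (K : nat -> X -> lift Y) Kl :
  is_chain (lift_poset X) u -> is_lub (lift_poset X) u ul ->
  (forall k x x', ord X x x' -> le_lift (ord Y) (K k x) (K (S k) x')) ->
  (forall a al m, is_chain X a -> is_lub X a al -> is_lub (lift_poset Y) (fun j => K (j + m) (a j)) (Kl al)) ->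
  is_lub (lift_poset Y) (fun k => bind (u k) (K k)) (bind ul Kl).
Proof.
  intros Hu Hl HKm HKc. pose proof (proj1 cX) as pX.
  assert (Hch : is_chain (lift_poset Y) (fun k => bind (u k) (K k))).
  { intros k. apply bind_mono; [apply Hu|apply HKm]. }
  destruct (lift_lub_cases X pX cX u ul Hu Hl) as [[HB ->]|[[[k Hk] ->]|(k0&a&al&Ha&Hua&Hal&->)]].
  - apply lub_const_eq. apply lift_po; auto. intros k; rewrite HB; auto.
  - simpl. split.
    + intros j. assert (H : le_lift (ord X) (u j) Star).
      exact (proj1 Hl j).
      destruct (le_to_star X pX _ H) as [-> | ->]; simpl. left; auto. right; left; auto.
    + intros v Hv. specialize (Hv k). rewrite Hk in Hv. simpl in Hv. rewrite (le_star_l Y v Hv). right; left; auto.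
  - simpl. apply (lub_tail _ (lift_po Y pY) _ k0); auto.
    replace (fun j => bind (u (j + k0)) (K (j + k0))) with (fun j => K (j + k0) (a j)).
    apply HKc; auto. apply functional_extensionality; intros j. rewrite Hua. reflexivity.
Qed.
End B.
Section F.
Variable Privilege : Type.
Variables C1 C2 : poset.
Notation FP := (fun_poset Privilege C1 C2).
Notation L2 := (lift_poset C2).

Lemma fun_po : PO C2 -> PO FP.
Proof.
  intros p2. pose proof (lift_po C2 p2) as pl. split; [|split].
  - intros f P d. apply (po_refl _ pl).
  - intros f g h H1 H2 P d. eapply (po_trans _ pl); [apply H1|apply H2].
  - intros [f Hf] [g Hg] H1 H2. simpl in *.
    assert (f = g). { apply functional_extensionality; intros P; apply functional_extensionality; intros d.
      apply (po_anti _ pl); [apply H1|apply H2]. }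
    subst. f_equal. apply proof_irrelevance.
Qed.

Lemma pw_lub (c : nat -> FP) (l : FP) :
  (forall P d, is_lub L2 (fun k => proj1_sig (c k) P d) (proj1_sig l P d)) -> is_lub FP c l.
Proof.
  intros H. split.
  - intros k P d. apply (H P d).
  - intros u Hu P d. apply (H P d). intros k. apply Hu.
Qed.

Hypothesis cpo1 : CPO C1.
Hypothesis cpo2 : CPO C2.

Lemma fun_cpo_strong : forall c, is_chain FP c -> exists l : FP,
  is_lub FP c l /\ forall P d, is_lub L2 (fun k => proj1_sig (c k) P d) (proj1_sig l P d).
Proof.
  intros c Hc. pose proof (proj1 cpo1) as p1. pose proof (proj1 cpo2) as p2.
  pose proof (lift_po C2 p2) as pl. pose proof (fun_po p2) as pf.
  assert (Hch : forall P d, is_chain L2 (fun k => proj1_sig (c k) P d)) by (intros P d k; apply Hc).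
  pose (m := fun P d => proj1_sig (constructive_indefinite_description _ (proj2 (lift_cpo C2 cpo2) _ (Hch P d)))).
  assert (Hm : forall P d, is_lub L2 (fun k => proj1_sig (c k) P d) (m P d)).
  { intros P d. unfold m. destruct constructive_indefinite_description; auto. }
  assert (Hcont : forall P, continuous C1 L2 (m P)).
  { intros P. split.
    - intros d d' Hdd'. apply (Hm P d). intros k. eapply (po_trans _ pl).
      + apply (proj1 (proj2_sig (c k) P)); eauto.
      + apply (Hm P d').
    - intros dj dl Hdj Hdl.
      set (a := fun k j => proj1_sig (c k) P (dj j)).
      assert (Ham : forall k k' j j', k <= k' -> j <= j' -> ord L2 (a k j) (a k' j')).
      { intros k k' j j' Hk Hj. unfold a. apply (po_trans _ pl _ (proj1_sig (c k) P (dj j'))).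
        - apply (proj1 (proj2_sig (c k) P)). apply (chain_le _ p1); auto.
        - apply (chain_le _ pf c Hc k k' Hk P (dj j')). }
      apply (cols_of_diag _ pl a Ham); [intros j; apply Hm|].
      apply (diag_of_rows _ pl a Ham (fun k => proj1_sig (c k) P dl)).
      + intros k. apply (proj2 (proj2_sig (c k) P)); auto.
      + apply Hm. }
  exists (exist _ m Hcont). split. apply pw_lub. exact Hm. exact Hm.
Qed.

Lemma fun_cpo : CPO FP.
Proof.
  split. apply fun_po, cpo2.
  intros c Hc. destruct (fun_cpo_strong c Hc) as [l [H _]]; eauto.
Qed.

Lemma fun_lub_pw c l : is_chain FP c -> is_lub FP c l ->
  forall P d, is_lub L2 (fun k => proj1_sig (c k) P d) (proj1_sig l P d).
Proof.
  intros Hc Hl. destruct (fun_cpo_strong c Hc) as [l' [H1 H2]].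
  rewrite (lub_unique _ (fun_po (proj1 cpo2)) c l l'); auto.
Qed.
End F.

Lemma bool_cpo : CPO bool_poset.
Proof.
  split. split; [|split]; simpl; intros; subst; auto.
  intros c Hc. exists (c 0). apply lub_const_eq. split; [|split]; simpl; intros; subst; auto.
  intros k; induction k; auto. rewrite <- IHk. symmetry. apply Hc.
Qed.

Lemma dom_cpo Privilege t : CPO (dom Privilege t).
Proof.
  induction t; simpl. apply bool_cpo. apply fun_cpo; auto.
Qed.
Section E.
Variable Privilege : Type.
Notation dm := (dom Privilege).
Notation so := (sem_opt Privilege).

Definition optle (o : option ty) : so o -> so o -> Prop :=
  match o with Some t => ord (dm t) | None => fun _ _ => True end.
Definition optlub (o : option ty) : (nat -> so o) -> so o -> Prop :=
  match o with Some t => is_lub (dm t) | None => fun _ _ => True end.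

Definition env_le D (h h' : env Privilege D) := forall y, optle (D y) (h y) (h' y).
Definition env_chain D (c : nat -> env Privilege D) := forall k, env_le D (c k) (c (S k)).
Definition env_lub D (c : nat -> env Privilege D) l := forall y, optlub (D y) (fun k => c k y) (l y).

Lemma optle_refl o a : optle o a a.
Proof. destruct o; simpl; auto. apply (po_refl _ (proj1 (dom_cpo Privilege t))). Qed.
Lemma env_le_refl D h : env_le D h h.
Proof. intros y; apply optle_refl. Qed.
Lemma optlub_const o a : optlub o (fun _ => a) a.
Proof. destruct o; simpl; auto. apply lub_const. apply (proj1 (dom_cpo Privilege t)). Qed.

Lemma lookup_le D (h h' : env Privilege D) x t (H : D x = Some t) :
  env_le D h h' -> ord (dm t) (lookup h x H) (lookup h' x H).
Proof.
  intros Hle. specialize (Hle x). unfold lookup. revert Hle. generalize (h x) (h' x).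
  rewrite H. simpl. auto.
Qed.

Lemma cast_lub o t (H : o = Some t) (s : nat -> so o) L :
  optlub o s L -> is_lub (dm t) (fun k => eq_rect o so (s k) _ H) (eq_rect o so L _ H).
Proof. subst. simpl. auto. Qed.

Lemma lookup_lub D (c : nat -> env Privilege D) l x t (H : D x = Some t) :
  env_lub D c l -> is_lub (dm t) (fun k => lookup (c k) x H) (lookup l x H).
Proof.
  intros Hl. unfold lookup. apply (cast_lub (D x) t H (fun k => c k x)). apply Hl.
Qed.

Lemma upd_le D (h h' : env Privilege D) x t v v' :
  env_le D h h' -> ord (dm t) v v' -> env_le (ext D x t) (upd h x t v) (upd h' x t v').
Proof.
  intros H1 H2 y. unfold upd, ext. destruct (Nat.eqb y x); simpl; auto.
Qed.

Lemma upd_chain D (c : nat -> env Privilege D) x t (v : nat -> sem Privilege t) :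
  env_chain D c -> is_chain (dm t) v -> env_chain (ext D x t) (fun k => upd (c k) x t (v k)).
Proof. intros H1 H2 k. apply upd_le; auto. Qed.

Lemma upd_lub D (c : nat -> env Privilege D) l x t (v : nat -> sem Privilege t) vl :
  env_lub D c l -> is_lub (dm t) v vl -> env_lub (ext D x t) (fun k => upd (c k) x t (v k)) (upd l x t vl).
Proof.
  intros H1 H2 y. unfold upd, ext. destruct (Nat.eqb y x); simpl; auto.
Qed.

Lemma env_chain_const D h : env_chain D (fun _ => h).
Proof. intros k; apply env_le_refl. Qed.
Lemma env_lub_const D h : env_lub D (fun _ => h) h.
Proof. intros y; apply optlub_const. Qed.

Lemma optlub_tail o (s : nat -> so o) L m :
  (forall k, optle o (s k) (s (S k))) -> optlub o s L -> optlub o (fun j => s (j + m)) L.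
Proof. destruct o; simpl; auto. intros. apply (lub_tail' _ (proj1 (dom_cpo Privilege t))); auto. Qed.

Lemma env_lub_tail D c l m : env_chain D c -> env_lub D c l -> env_lub D (fun j => c (j + m)) l.
Proof.
  intros Hc Hl y. apply (optlub_tail (D y) (fun k => c k y)); auto. intros k; apply Hc.
Qed.
Lemma env_chain_tail D c m : env_chain D c -> env_chain D (fun j => c (j + m)).
Proof. intros Hc k. apply Hc. Qed.
End E.
Lemma optlub_upper Privilege o (s : nat -> sem_opt Privilege o) L k : optlub Privilege o s L -> optle Privilege o (s k) L.
Proof. destruct o; simpl; auto. intros H; apply H. Qed.

Lemma env_lub_upper Privilege D (c : nat -> env Privilege D) l k : env_lub Privilege D c l -> env_le Privilege D (c k) l.
Proof.
  intros H y. apply (optlub_upper Privilege (D y) (fun k => c k y)). apply H.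
Qed.

Section Lam.
Variable Privilege : Type.
Notation dm := (dom Privilege).
Variables (D : ctx) (x : var) (t1 t2 : ty).
Variable F : PrivSet Privilege -> env Privilege (ext D x t1) -> lift (sem Privilege t2).
Hypothesis Fm : forall P h h', env_le Privilege _ h h' -> ord (lift_poset (dm t2)) (F P h) (F P h').
Hypothesis Fc : forall P c l, env_chain Privilege _ c -> env_lub Privilege _ c l ->
  is_lub (lift_poset (dm t2)) (fun k => F P (c k)) (F P l).

Definition Phi (h : env Privilege D) : sem Privilege (Arr t1 t2) :=
  mk_fun t1 t2 (fun P v => F P (upd h x t1 v)).

Lemma phi_val h : proj1_sig (Phi h) = fun P v => F P (upd h x t1 v).
Proof.
  unfold Phi, mk_fun. destruct excluded_middle_informative as [H|H]; auto.
  exfalso; apply H. intros P. split.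
  - intros d d' Hd. apply Fm. apply upd_le; auto. apply env_le_refl.
  - intros c l Hc Hl. apply (Fc P (fun k => upd h x t1 (c k))).
    apply upd_chain; auto. apply env_chain_const. apply upd_lub; auto. apply env_lub_const.
Qed.

Lemma phi_mono h h' : env_le Privilege D h h' -> ord (dm (Arr t1 t2)) (Phi h) (Phi h').
Proof.
  intros H P d. rewrite !phi_val. apply Fm. apply upd_le; auto.
  apply (po_refl _ (proj1 (dom_cpo Privilege t1))).
Qed.

Lemma phi_cont c l : env_chain Privilege D c -> env_lub Privilege D c l ->
  is_lub (dm (Arr t1 t2)) (fun k => Phi (c k)) (Phi l).
Proof.
  intros Hc Hl. apply pw_lub. intros P d.
  replace (fun k => proj1_sig (Phi (c k)) P d) with (fun k => F P (upd (c k) x t1 d))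
    by (apply functional_extensionality; intros k; rewrite phi_val; auto).
  rewrite phi_val. apply (Fc P (fun k => upd (c k) x t1 d)).
  - intros k. apply upd_le. apply Hc. apply (po_refl _ (proj1 (dom_cpo Privilege t1))).
  - apply (upd_lub _ _ c l x t1 (fun _ => d)); auto. apply lub_const. apply (proj1 (dom_cpo Privilege t1)).
Qed.
End Lam.

Section Kl.
Variable Privilege : Type.
Notation dm := (dom Privilege).
Variables (D : ctx) (f : var) (t1 t2 : ty).
Notation T := (Arr t1 t2).
Variable Ph : env Privilege (ext D f T) -> sem Privilege T.
Hypothesis Pm : forall h h', env_le Privilege _ h h' -> ord (dm T) (Ph h) (Ph h').
Hypothesis Pc : forall c l, env_chain Privilege _ c -> env_lub Privilege _ c l ->
  is_lub (dm T) (fun k => Ph (c k)) (Ph l).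

Let poT := proj1 (dom_cpo Privilege T).

Fixpoint it (h : env Privilege D) (j : nat) : sem Privilege T :=
  match j with 0 => bot_fun Privilege t1 t2 | S j => Ph (upd h f T (it h j)) end.

Lemma bot_le g : ord (dm T) (bot_fun Privilege t1 t2) g.
Proof. intros P d. left. reflexivity. Qed.

Lemma it_chain h : is_chain (dm T) (it h).
Proof.
  intros j. induction j. apply bot_le. simpl. apply Pm. apply upd_le; auto. apply env_le_refl.
Qed.

Lemma it_mono h h' j : env_le Privilege D h h' -> ord (dm T) (it h j) (it h' j).
Proof.
  intros H. induction j. apply bot_le. simpl. apply Pm. apply upd_le; auto.
Qed.

Definition K (h : env Privilege D) : sem Privilege T :=
  proj1_sig (constructive_indefinite_description _ (proj2 (dom_cpo Privilege T) (it h) (it_chain h))).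

Lemma K_lub h : is_lub (dm T) (it h) (K h).
Proof. unfold K. destruct constructive_indefinite_description; auto. Qed.

Lemma K_fix h : Ph (upd h f T (K h)) = K h.
Proof.
  apply (lub_unique _ poT (fun j => Ph (upd h f T (it h j)))).
  - apply Pc. apply upd_chain. apply env_chain_const. apply it_chain.
    apply upd_lub. apply env_lub_const. apply K_lub.
  - replace (fun j => Ph (upd h f T (it h j))) with (fun j => it h (j + 1)).
    apply lub_tail'; auto. apply it_chain. apply K_lub.
    apply functional_extensionality; intros j. rewrite Nat.add_1_r. reflexivity.
Qed.

Lemma K_least h g : Ph (upd h f T g) = g -> ord (dm T) (K h) g.
Proof.
  intros Hg. apply (K_lub h). intros j. induction j. apply bot_le.
  simpl. rewrite <- Hg. apply Pm. apply upd_le; auto. apply env_le_refl.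
Qed.

Lemma lfp_K h : lfp (fun g => Ph (upd h f T g)) = K h.
Proof.
  unfold lfp. destruct excluded_middle_informative as [H|H].
  - destruct constructive_indefinite_description as [g0 [H1 H2]]. simpl.
    apply (po_anti _ poT). apply H2. apply K_fix. apply K_least. auto.
  - exfalso. apply H. exists (K h). split. apply K_fix. intros g' Hg'. apply K_least; auto.
Qed.

Lemma lfp_K2 h G : (forall g, G g = Ph (upd h f T g)) -> lfp G = K h.
Proof.
  intros HG. replace G with (fun g => Ph (upd h f T g)). apply lfp_K.
  apply functional_extensionality; intros; symmetry; auto.
Qed.

Lemma K_mono h h' : env_le Privilege D h h' -> ord (dm T) (K h) (K h').
Proof.
  intros H. apply (K_lub h). intros j. eapply (po_trans _ poT). apply it_mono; eauto. apply K_lub.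
Qed.

Lemma K_cont c l : env_chain Privilege D c -> env_lub Privilege D c l ->
  is_lub (dm T) (fun k => K (c k)) (K l).
Proof.
  intros Hc Hl.
  assert (S1 : forall j, is_lub (dm T) (fun k => it (c k) j) (it l j)).
  { induction j. simpl. apply (lub_const _ poT). simpl.
    apply (Pc (fun k => upd (c k) f T (it (c k) j))).
    - apply upd_chain; auto. intros k. apply it_mono. apply Hc.
    - apply upd_lub; auto. }
  split.
  - intros k. apply K_mono. apply env_lub_upper; auto.
  - intros u Hu. apply (K_lub l). intros j. apply (S1 j). intros k.
    eapply (po_trans _ poT). apply (K_lub (c k)). apply Hu.
Qed.
End Kl.
Lemma lub_ext (C : poset) (c c' : nat -> C) l : (forall k, c k = c' k) -> is_lub C c' l -> is_lub C c l.
Proof. intros H. replace c with c'; auto. apply functional_extensionality; auto. Qed.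

Lemma bool_lub_const a al : is_chain bool_poset a -> is_lub bool_poset a al -> forall j, a j = al.
Proof.
  intros Hc Hl. assert (H0 : forall j, a j = a 0).
  { induction j; auto. rewrite <- IHj. symmetry. apply Hc. }
  assert (al = a 0). { apply (lub_unique _ (proj1 bool_cpo) a); auto. apply lub_const_eq. apply bool_cpo. auto. }
  intros j; rewrite H0; auto.
Qed.

Lemma app_diag Privilege t1 t2 (a : nat -> sem Privilege (Arr t1 t2)) al P (v : nat -> sem Privilege t1) vl m :
  is_chain (dom Privilege (Arr t1 t2)) a -> is_lub (dom Privilege (Arr t1 t2)) a al ->
  is_chain (dom Privilege t1) v -> is_lub (dom Privilege t1) v vl ->
  is_lub (lift_poset (dom Privilege t2)) (fun i => proj1_sig (a (i + m)) P (v i)) (proj1_sig al P vl).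
Proof.
  intros Ha Hal Hv Hvl.
  pose proof (dom_cpo Privilege t1) as c1. pose proof (dom_cpo Privilege t2) as c2.
  pose proof (lift_po _ (proj1 c2)) as pl. pose proof (dom_cpo Privilege (Arr t1 t2)) as cf.
  set (b := fun k i => proj1_sig (a (k + m)) P (v i)).
  change (is_lub (lift_poset (dom Privilege t2)) (fun i => b i i) (proj1_sig al P vl)).
  apply (diag_of_rows _ pl b) with (r := fun k => proj1_sig (a (k + m)) P vl).
  - intros k k' j j' Hk Hj. unfold b. apply (po_trans _ pl _ (proj1_sig (a (k + m)) P (v j'))).
    + apply (proj1 (proj2_sig (a (k + m)) P)). apply (chain_le _ (proj1 c1)); auto.
    + apply (chain_le _ (proj1 cf) a Ha (k+m) (k'+m)). lia.
  - intros k. apply (proj2 (proj2_sig (a (k + m)) P)); auto.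
  - apply (lub_tail' _ pl (fun k => proj1_sig (a k) P vl)). intros k; apply Ha.
    apply (fun_lub_pw Privilege (dom Privilege t1) (dom Privilege t2)); auto.
Qed.

Section Den.
Variables Principal Privilege : Type.
Variable A : Principal -> PrivSet Privilege.
Notation dm := (dom Privilege).

Lemma den_ok D e t (d : typing Principal Privilege D e t) :
 (forall n P h h', env_le Privilege D h h' -> ord (lift_poset (dm t)) (den A d n P h) (den A d n P h')) /\
 (forall n P c l, env_chain Privilege D c -> env_lub Privilege D c l ->
    is_lub (lift_poset (dm t)) (fun k => den A d n P (c k)) (den A d n P l)).
Proof.
  induction d; simpl.
  - split. intros; right; left; auto. intros. apply lub_const. apply lift_po, bool_cpo.
  - split.
    + intros. apply le_vals. apply lookup_le; auto.
    + intros. apply lub_vals. apply (dom_cpo Privilege t). apply lookup_lub; auto.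
  - destruct IHd1 as [M0 C0], IHd2 as [M1 C1], IHd3 as [M2 C2].
    pose proof (proj1 (dom_cpo Privilege t)) as pt. split.
    + intros n P h h' H. apply (bind_mono bool_poset (dm t) bool_cpo); [apply M0; auto|].
      intros x x' Hx. simpl in Hx. subst. destruct x'; [apply M1|apply M2]; auto.
    + intros n P c l Hc Hl.
      apply (bind_cont bool_poset (dm t) bool_cpo pt (fun k => den A d1 n P (c k)) _
        (fun k b => if b then den A d2 n P (c k) else den A d3 n P (c k))
        (fun b => if b then den A d2 n P l else den A d3 n P l)); auto.
      * intros k. apply M0. apply Hc.
      * intros k x x' Hx. simpl in Hx. subst. destruct x'; [apply M1|apply M2]; apply Hc.
      * intros a al m Ha Hal. pose proof (bool_lub_const a al Ha Hal) as E. cbv beta.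
        apply (lub_ext (lift_poset (dm t)) _ (fun j => if al then den A d2 n P (c (j + m)) else den A d3 n P (c (j + m)))).
        { intros j. cbv beta. rewrite E. auto. }
        destruct al; [apply C1|apply C2]; auto using env_chain_tail, env_lub_tail.
  - destruct IHd as [M0 C0]. split.
    + intros n P h h' H.
      change (ord (lift_poset (dm (Arr t1 t2)))
        (Val (Phi Privilege D x t1 t2 (fun P' h => den A d n P' h) h))
        (Val (Phi Privilege D x t1 t2 (fun P' h => den A d n P' h) h'))).
      apply le_vals. apply phi_mono; auto.
    + intros n P c l Hc Hl.
      change (is_lub (lift_poset (dm (Arr t1 t2)))
        (fun k => Val (Phi Privilege D x t1 t2 (fun P' h => den A d n P' h) (c k)))
        (Val (Phi Privilege D x t1 t2 (fun P' h => den A d n P' h) l))).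
      apply lub_vals. apply (dom_cpo Privilege (Arr t1 t2)). apply phi_cont; auto.
  - destruct IHd1 as [M1 C1], IHd2 as [M2 C2].
    pose proof (dom_cpo Privilege t1) as c1. pose proof (proj1 (dom_cpo Privilege t2)) as p2.
    pose proof (dom_cpo Privilege (Arr t1 t2)) as cf. split.
    + intros n P h h' H. apply (bind_mono _ (dm t2) cf); [apply M1; auto|].
      intros f f' Hf. apply (bind_mono _ (dm t2) c1); [apply M2; auto|].
      intros v v' Hv. apply (po_trans _ (lift_po _ p2) _ (proj1_sig f P v')).
      apply (proj1 (proj2_sig f P)); auto. apply Hf.
    + intros n P c l Hc Hl.
      apply (bind_cont _ (dm t2) cf p2 (fun k => den A d1 n P (c k)) _
        (fun k f => bind (den A d2 n P (c k)) (fun v => proj1_sig f P v))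
        (fun f => bind (den A d2 n P l) (fun v => proj1_sig f P v))); auto.
      * intros k. apply M1. apply Hc.
      * intros k f f' Hf. apply (bind_mono _ (dm t2) c1); auto. apply M2; apply Hc.
        intros v v' Hv. apply (po_trans _ (lift_po _ p2) _ (proj1_sig f P v')).
        apply (proj1 (proj2_sig f P)); auto. apply Hf.
      * intros a al m Ha Hal.
        apply (bind_cont _ (dm t2) c1 p2 (fun j => den A d2 n P (c (j + m))) _
          (fun j v => proj1_sig (a j) P v) (fun v => proj1_sig al P v)).
        -- intros k. apply M2. apply Hc.
        -- apply C2; auto using env_chain_tail, env_lub_tail.
        -- intros k v v' Hv. apply (po_trans _ (lift_po _ p2) _ (proj1_sig (a k) P v')).
           apply (proj1 (proj2_sig (a k) P)); auto. apply Ha.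
        -- intros v vl m' Hv Hvl. apply app_diag; auto.
  - destruct IHd1 as [M1 C1], IHd2 as [M2 C2].
    pose proof (proj1 (dom_cpo Privilege (Arr t1 t2))) as pf.
    pose proof (lift_po _ (proj1 (dom_cpo Privilege t))) as pl.
    assert (PmG : forall n h h', env_le Privilege _ h h' ->
      ord (dm (Arr t1 t2)) (Phi Privilege (ext D f (Arr t1 t2)) x t1 t2 (fun P' h => den A d1 n P' h) h)
                           (Phi Privilege (ext D f (Arr t1 t2)) x t1 t2 (fun P' h => den A d1 n P' h) h')).
    { intros n. apply (phi_mono Privilege _ x t1 t2 _ (fun P => M1 n P) (fun P => C1 n P)). }
    assert (PcG : forall n c l, env_chain Privilege _ c -> env_lub Privilege _ c l ->
      is_lub (dm (Arr t1 t2)) (fun k => Phi Privilege (ext D f (Arr t1 t2)) x t1 t2 (fun P' h => den A d1 n P' h) (c k))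
                           (Phi Privilege (ext D f (Arr t1 t2)) x t1 t2 (fun P' h => den A d1 n P' h) l)).
    { intros n. apply (phi_cont Privilege _ x t1 t2 _ (fun P => M1 n P) (fun P => C1 n P)). }
    split.
    + intros n P h h' H.
      rewrite (lfp_K2 Privilege D f t1 t2 _ (PmG n) (PcG n) h (fun g => mk_fun t1 t2 (fun P' v => den A d1 n P' (upd (upd h f (Arr t1 t2) g) x t1 v))) (fun g => eq_refl)).
      rewrite (lfp_K2 Privilege D f t1 t2 _ (PmG n) (PcG n) h' (fun g => mk_fun t1 t2 (fun P' v => den A d1 n P' (upd (upd h' f (Arr t1 t2) g) x t1 v))) (fun g => eq_refl)).
      apply M2. apply upd_le; auto. apply K_mono; auto.
    + intros n P c l Hc Hl.
      apply (lub_ext (lift_poset (dm t)) _ (fun k => den A d2 n P (upd (c k) f (Arr t1 t2) (K Privilege D f t1 t2 _ (PmG n) (c k))))).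
      { intros k. rewrite (lfp_K2 Privilege D f t1 t2 _ (PmG n) (PcG n) (c k) (fun g => mk_fun t1 t2 (fun P' v => den A d1 n P' (upd (upd (c k) f (Arr t1 t2) g) x t1 v))) (fun g => eq_refl)). reflexivity. }
      rewrite (lfp_K2 Privilege D f t1 t2 _ (PmG n) (PcG n) l (fun g => mk_fun t1 t2 (fun P' v => den A d1 n P' (upd (upd l f (Arr t1 t2) g) x t1 v))) (fun g => eq_refl)).
      apply C2.
      * apply upd_chain; auto. intros k. apply K_mono. apply Hc.
      * apply upd_lub; auto. apply K_cont; auto.
  - destruct IHd as [M0 C0]. split; intros; [apply M0|apply C0]; auto.
  - destruct IHd as [M0 C0]. split; intros; [apply M0|apply C0]; auto.
  - destruct IHd as [M0 C0]. pose proof (lift_po _ (proj1 (dom_cpo Privilege t))) as pl. split.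
    + intros n P h h' H. destruct (mem P p); [apply M0; auto|]. apply (po_refl _ pl).
    + intros n P c l Hc Hl. destruct (mem P p); [apply C0; auto|]. apply (lub_const _ pl).
  - destruct IHd1 as [M1 C1], IHd2 as [M2 C2]. split.
    + intros n P h h' H. destruct (mem P p); [apply M1|apply M2]; auto.
    + intros n P c l Hc Hl. destruct (mem P p); [apply C1|apply C2]; auto.
Qed.
End Den.
Section Den2.
Variables Principal Privilege : Type.
Variable A : Principal -> PrivSet Privilege.
Notation dm := (dom Privilege).

Lemma den_lam_val D x t1 t2 e (d0 : typing Principal Privilege (ext D x t1) e t2) n h :
  proj1_sig (mk_fun t1 t2 (fun P' v => den A d0 n P' (upd h x t1 v))) = fun P' v => den A d0 n P' (upd h x t1 v).
Proof.
  exact (phi_val Privilege D x t1 t2 (fun P h => den A d0 n P h)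
    (fun P => proj1 (den_ok Principal Privilege A _ _ _ d0) n P)
    (fun P => proj2 (den_ok Principal Privilege A _ _ _ d0) n P) h).
Qed.

Section LR.
Variables (D : ctx) (f x : var) (t1 t2 : ty) (e1 : expr Principal Privilege).
Variable (d1 : typing Principal Privilege (ext (ext D f (Arr t1 t2)) x t1) e1 t2).
Variable n : Principal.
Definition PhL := Phi Privilege (ext D f (Arr t1 t2)) x t1 t2 (fun P' h => den A d1 n P' h).
Lemma PhL_m : forall h h', env_le Privilege _ h h' -> ord (dm (Arr t1 t2)) (PhL h) (PhL h').
Proof. apply (phi_mono Privilege _ x t1 t2 _ (fun P => proj1 (den_ok _ _ A _ _ _ d1) n P) (fun P => proj2 (den_ok _ _ A _ _ _ d1) n P)). Qed.
Lemma PhL_c : forall c l, env_chain Privilege _ c -> env_lub Privilege _ c l ->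
      is_lub (dm (Arr t1 t2)) (fun k => PhL (c k)) (PhL l).
Proof. apply (phi_cont Privilege _ x t1 t2 _ (fun P => proj1 (den_ok _ _ A _ _ _ d1) n P) (fun P => proj2 (den_ok _ _ A _ _ _ d1) n P)). Qed.
Definition KL h := K Privilege D f t1 t2 PhL PhL_m h.
Lemma lfp_KL h : lfp (fun g => mk_fun t1 t2 (fun P' v => den A d1 n P' (upd (upd h f (Arr t1 t2) g) x t1 v))) = KL h.
Proof. apply (lfp_K2 Privilege D f t1 t2 PhL PhL_m PhL_c h). intros g. reflexivity. Qed.
Lemma itS_val h j P a : proj1_sig (it Privilege D f t1 t2 PhL h (S j)) P a =
   den A d1 n P (upd (upd h f (Arr t1 t2) (it Privilege D f t1 t2 PhL h j)) x t1 a).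
Proof. simpl. unfold PhL. rewrite phi_val. reflexivity.
  exact (fun P => proj1 (den_ok _ _ A _ _ _ d1) n P). exact (fun P => proj2 (den_ok _ _ A _ _ _ d1) n P). Qed.
End LR.
End Den2.
Definition liftR {X Y : Type} (r : X -> Y -> Prop) (u : lift X) (v : lift Y) : Prop :=
  (u = Bot /\ v = Bot) \/ exists a b, u = Val a /\ v = Val b /\ r a b.

Lemma liftR_mono {X Y} (r r' : X -> Y -> Prop) u v : (forall a b, r a b -> r' a b) -> liftR r u v -> liftR r' u v.
Proof. intros H [[-> ->]|(a&b&->&->&Hr)]. left; auto. right; eauto 6. Qed.

Lemma liftR_bind {X Y X' Y'} (r : X -> Y -> Prop) (r' : X' -> Y' -> Prop) u v K K' :
  liftR r u v -> (forall a b, r a b -> liftR r' (K a) (K' b)) -> liftR r' (bind u K) (bind v K').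
Proof. intros [[-> ->]|(a&b&->&->&Hr)] H; simpl. left; auto. auto. Qed.

Section Rel.
Variable Privilege : Type.
Notation dm := (dom Privilege).
Notation sm := (sem Privilege).

Fixpoint R (th : aty Privilege) : forall t t' : ty, sm t -> sm t' -> Prop :=
  match th with
  | ABool _ => fun t t' =>
      match t as t0, t' as t0' return sm t0 -> sm t0' -> Prop with
      | Bool, Bool => fun a b => a = b
      | _, _ => fun _ _ => True
      end
  | AArr th1 Pi th2 => fun t t' =>
      match t as t0, t' as t0' return sm t0 -> sm t0' -> Prop with
      | Arr t1 t2, Arr t1' t2' => fun g g' => forall P, subset Pi P -> forall Q a b,
          R th1 t1 t1' a b -> liftR (R th2 t2 t2') (proj1_sig g P a) (proj1_sig g' Q b)
      | _, _ => fun _ _ => True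
      end
  end.

Lemma R_sub th th' : subty th th' -> forall t t' a b, R th t t' a b -> R th' t t' a b.
Proof.
  induction 1 as [|th1 th1' th2 th2' Pi1 Pi2 S1 IH1 S2 IH2 S3]; intros t t' a b HR; auto.
  destruct t, t'; simpl in *; auto.
  intros P HP Q x y Hxy. eapply liftR_mono; [apply IH2|].
  apply HR. intros z Hz. apply HP, S3, Hz. apply IH1; auto.
Qed.

Lemma val_lub (C : poset) (cp : CPO C) u ul k a : is_chain (lift_poset C) u -> is_lub (lift_poset C) u ul ->
  is_chain C a -> (forall j, u (j + k) = Val (a j)) -> exists al, ul = Val al /\ is_lub C a al.
Proof.
  intros Hu Hl Ha Hua. destruct (proj2 cp a Ha) as [al Hal]. exists al. split; auto.
  apply (lub_unique _ (lift_po _ (proj1 cp)) u); auto.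
  apply (lub_tail _ (lift_po _ (proj1 cp)) u k); auto.
  apply (lub_ext (lift_poset C) _ (fun j => Val (a j))); auto. apply lub_vals; auto. apply cp.
Qed.

Lemma liftR_adm (C C' : poset) (cp : CPO C) (cp' : CPO C') (r : C -> C' -> Prop)
  (radm : forall a b al bl, is_chain C a -> is_chain C' b -> is_lub C a al -> is_lub C' b bl ->
     (forall k, r (a k) (b k)) -> r al bl)
  u v ul vl : is_chain (lift_poset C) u -> is_chain (lift_poset C') v ->
  is_lub (lift_poset C) u ul -> is_lub (lift_poset C') v vl -> (forall k, liftR r (u k) (v k)) ->
  liftR r ul vl.
Proof.
  intros Hu Hv Hul Hvl H.
  destruct (lift_lub_cases C (proj1 cp) cp u ul Hu Hul) as [[HB ->]|[[[k Hk] ->]|(k0&a&al&Ha&Hua&Hal&->)]].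
  - left. split; auto. assert (HvB : forall k, v k = Bot).
    { intros k. destruct (H k) as [[_ ?]|(x&y&Hx&_)]; auto. rewrite HB in Hx; discriminate. }
    apply (lub_unique _ (lift_po _ (proj1 cp')) v); auto. apply lub_const_eq. apply lift_po, cp'. auto.
  - exfalso. destruct (H k) as [[Hx _]|(x&y&Hx&_)]; rewrite Hk in Hx; discriminate.
  - assert (Hv0 : exists b0, v k0 = Val b0).
    { destruct (H k0) as [[Hx _]|(x&y&Hx&Hy&_)]. specialize (Hua 0). simpl in Hua. rewrite Hua in Hx; discriminate. eauto. }
    destruct Hv0 as [b0 Hb0]. destruct (val_tail C' (proj1 cp') v k0 b0 Hv Hb0) as [b [Hb Hvb]].
    destruct (val_lub C' cp' v vl k0 b Hv Hvl Hb Hvb) as [bl [-> Hbl]].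
    right. exists al, bl. split; auto. split; auto. apply (radm a b); auto.
    intros j. destruct (H (j + k0)) as [[Hx _]|(x&y&Hx&Hy&Hr)].
    + rewrite Hua in Hx; discriminate.
    + rewrite Hua in Hx. rewrite Hvb in Hy. injection Hx as ->. injection Hy as ->. auto.
Qed.

Lemma R_adm th : forall t t' (c : nat -> sm t) (c' : nat -> sm t') l l',
  is_chain (dm t) c -> is_chain (dm t') c' -> is_lub (dm t) c l -> is_lub (dm t') c' l' ->
  (forall k, R th t t' (c k) (c' k)) -> R th t t' l l'.
Proof.
  induction th; intros t t' c c' l l' Hc Hc' Hl Hl' H; destruct t, t'; simpl in *; auto.
  - rewrite <- (bool_lub_const c l Hc Hl 0), <- (bool_lub_const c' l' Hc' Hl' 0). apply H.
  - intros P HP Q a b Hab.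
    apply (liftR_adm (dm t2) (dm t'2) (dom_cpo Privilege t2) (dom_cpo Privilege t'2) _ (IHth2 t2 t'2)
      (fun k => proj1_sig (c k) P a) (fun k => proj1_sig (c' k) Q b)).
    + intros k; apply Hc.
    + intros k; apply Hc'.
    + apply (fun_lub_pw Privilege (dm t1) (dm t2)); auto using dom_cpo.
    + apply (fun_lub_pw Privilege (dm t'1) (dm t'2)); auto using dom_cpo.
    + intros k. apply H; auto.
Qed.

Definition optR (o : option (aty Privilege)) (o1 o2 : option ty) : sem_opt Privilege o1 -> sem_opt Privilege o2 -> Prop :=
  match o, o1 as p1, o2 as p2 return sem_opt Privilege p1 -> sem_opt Privilege p2 -> Prop with
  | Some th, Some t, Some t' => R th t t'
  | _, _, _ => fun _ _ => True
  end.

Definition EnvR (G : actx Privilege) D D' (h : env Privilege D) (h' : env Privilege D') :=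
  forall y, optR (G y) (D y) (D' y) (h y) (h' y).

Lemma EnvR_upd G D D' h h' x th t t' v v' : EnvR G D D' h h' -> R th t t' v v' ->
  EnvR (aext G x th) (ext D x t) (ext D' x t') (upd h x t v) (upd h' x t' v').
Proof. intros H1 H2 y. unfold aext, ext, upd. destruct (Nat.eqb y x); simpl; auto. Qed.

Lemma optR_cast th o o' t t' (H : o = Some t) (H' : o' = Some t') a b :
  optR (Some th) o o' a b -> R th t t' (eq_rect o (sem_opt Privilege) a _ H) (eq_rect o' (sem_opt Privilege) b _ H').
Proof. subst. simpl. auto. Qed.
End Rel.
From Stdlib Require Import Program.Equality.

Lemma mem_true {X} (P : PrivSet X) p : P p -> mem P p = true.
Proof. intros H. unfold mem. destruct excluded_middle_informative; [reflexivity|contradiction]. Qed.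

Section Fund.
Variables Principal Privilege : Type.
Variable A : Principal -> PrivSet Privilege.

Lemma fund G n e th Pi : sa A G n e th Pi -> test_free e ->
  forall D D' t t' (d1 : typing Principal Privilege D e t) (d2 : typing Principal Privilege D' (erase e) t')
    h h' P Q n', subset Pi P -> EnvR Privilege G D D' h h' ->
    liftR (R Privilege th t t') (den A d1 n P h) (den A d2 n' Q h').
Proof.
  induction 1; simpl; intros TF D D' t t' d1 d2 h h' P Q nn HP HE.
  - dependent destruction d1. dependent destruction d2. simpl. right. eauto.
  - dependent destruction d1. dependent destruction d2. simpl. right. do 2 eexists; split; [reflexivity|split;[reflexivity|]].
    specialize (HE x). rewrite H in HE. apply optR_cast. exact HE.
  - dependent destruction d1. dependent destruction d2. simpl. right. do 2 eexists; split; [reflexivity|split;[reflexivity|]].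
    simpl. intros P' HP' Q' a b Hab. rewrite !den_lam_val.
    apply IHsa; auto. apply EnvR_upd; auto.
  - destruct TF as [TF1 TF2].
    dependent destruction d1. dependent destruction d2. simpl.
    eapply liftR_bind. { apply IHsa1; auto. intros z Hz. apply HP. right. left. auto. }
    intros f g Hfg. eapply liftR_bind. { apply IHsa2; auto. intros z Hz. apply HP. right. right. auto. }
    intros a b Hab. simpl in Hfg. apply Hfg. intros z Hz. apply HP. left. auto.
    eapply R_sub; eauto.
  - destruct TF as [TF0 [TF1 TF2]].
    dependent destruction d1. dependent destruction d2. simpl.
    eapply liftR_bind. { apply IHsa1; auto. intros z Hz. apply HP. left. auto. }
    intros a b Hab. simpl in Hab. subst b. destruct a.
    + apply IHsa2; auto. intros z Hz. apply HP. right. left. auto.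
    + apply IHsa3; auto. intros z Hz. apply HP. right. right. auto.
  - destruct TF as [TF1 TF2].
    dependent destruction d1. dependent destruction d2. simpl.
    rewrite (lfp_KL Principal Privilege A D f x t1 t2 e1 d1_1 n h).
    rewrite (lfp_KL Principal Privilege A D0 f x t0 t3 (erase e1) d2_1 nn h').
    apply IHsa2; auto. { intros z Hz. apply HP. right. auto. }
    apply EnvR_upd; auto. unfold KL.
    eapply R_adm; [apply it_chain|apply it_chain|apply K_lub|apply K_lub|].
    all: try (intros ? ? ?; apply PhL_m; auto; fail).
    intros j. induction j.
    + intros P' HP' Q' a b Hab. left. split; reflexivity.
    + intros P' HP' Q' a b Hab. rewrite !itS_val. apply IHsa1; auto.
      apply EnvR_upd; auto. apply EnvR_upd; auto.
  - simpl in d2. dependent destruction d1. simpl. rewrite mem_true.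
    + apply IHsa; auto. intros z Hz. apply HP. left. auto.
    + apply HP. right. reflexivity.
  - simpl in d2. dependent destruction d1. simpl. apply IHsa; auto.
    unfold join. destruct (mem (A n) p); auto. intros z [Hz|Hz]; [left; apply HP; auto|right; auto].
  - dependent destruction d1. dependent destruction d2. simpl. apply IHsa; auto.
    intros z Hz. split; auto.
  - contradiction.
Qed.
End Fund.

Theorem theorem4 (Principal Privilege : Type) (A : Principal -> PrivSet Privilege)
  (n : Principal) (e : expr Principal Privilege) (Pi : PrivSet Privilege) :
  test_free e ->
  sa A (actx0 Privilege) n e (ABool Privilege) Pi ->
  forall (P : PrivSet Privilege), subset Pi P ->
  forall (d1 : typing Principal Privilege ctx0 e Bool) (d2 : typing Principal Privilege ctx0 (erase e) Bool),
    den A d1 n P (env0 Privilege) = den A d2 n P (env0 Privilege).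
Proof.
  intros TF Hsa P HP d1 d2.
  destruct (fund Principal Privilege A _ _ _ _ _ Hsa TF ctx0 ctx0 Bool Bool d1 d2 (env0 Privilege) (env0 Privilege) P P n HP)
    as [[-> ->]|(a&b&->&->&Hab)].
  - intros y. simpl. auto.
  - reflexivity.
  - simpl in Hab. subst. reflexivity.
Qed.
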